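(* Consider a common interest game and fix, for each $i$, parameters $\lambda^i\in[0,1]$, $\gamma^i,\kappa^i\in(0,1)$ and a stochastic kernel $h^i\in\mathcal{P}(\Pi^i\mid\Pi^i\times 2^{\Pi^i})$. Let $\{\bm{\pi}_k\}_{k\ge0}$ be the time-homogeneous Markov chain on $\bm{\Pi}$ generated by the Idealized Update Procedure (defined in the context), with transition matrix $A_{\bm{\gamma},\bm{\kappa},\mathbf{h}}$, where $\bm{\gamma}=(\gamma^i)_i$, $\bm{\kappa}=(\kappa^i)_i$, $\mathbf{h}=(h^i)_i$. Then this chain has a unique stationary distribution $\mu^*_{\bm{\gamma},\bm{\kappa},\mathbf{h}}$, and for every $\mu_0\in\mathcal{P}(\bm{\Pi})$, $\lim_{n\to\infty}\mu_0A^n_{\bm{\gamma},\bm{\kappa},\mathbf{h}}=\mu^*_{\bm{\gamma},\bm{\kappa},\mathbf{h}}$. Moreover, for every $\epsilon\in(0,1)$ and every $\bm{\kappa}\in(0,1)^N$ there exists $\bar{\gamma}_\epsilon(\bm{\kappa})>0$ such that, if $\gamma^i\in(0,\bar{\gamma}_\epsilon(\bm{\kappa}))$ for all $i$ (and for every choice of $\lambda^i$ and $h^i$), then \[ \mu^*_{\bm{\gamma},\bm{\kappa},\mathbf{h}}(\bm{\Pi}_{\rm opt})\ge 1-\epsilon/2 . \]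
   Context: Game setup: a finite discounted stochastic game with $N$ decision makers, finite state set $\mathbb{X}$, finite action sets $\mathbb{U}^i$, discount factors $\beta^i\in(0,1)$, costs $c^i:\mathbb{X}\times\mathbb{U}\to\mathbb{R}$ ($\mathbb{U}=\times_i\mathbb{U}^i$), and transition kernel $P(\cdot\mid x,\mathbf{u})$. $\Pi^i$ is the (finite) set of maps $\mathbb{X}\to\mathbb{U}^i$, $\bm{\Pi}=\times_i\Pi^i$, $\bm{\Pi}^{-i}=\times_{j\neq i}\Pi^j$, $\bm{\pi}=(\pi^i,\bm{\pi}^{-i})$. $J^i_x(\bm{\pi})=E[\sum_{t\ge0}(\beta^i)^tc^i(x_t,\bm{\pi}(x_t))\mid x_0=x]$ with $x_{t+1}\sim P(\cdot\mid x_t,\bm{\pi}(x_t))$. $\pi^i\in\Pi^i$ is a best reply to $\bm{\pi}^{-i}$ if $J^i_x(\pi^i,\bm{\pi}^{-i})=\min_{\sigma^i\in\Pi^i}J^i_x(\sigma^i,\bm{\pi}^{-i})$ for all $x$; $\mathrm{BR}^i(\bm{\pi}^{-i})\subseteq\Pi^i$ denotes the (nonempty) set of best replies. $\bm{\Pi}_{\rm opt}=\{\bm{\pi}^*:J^i_x(\bm{\pi}^* )=\inf_{\bm{\pi}\in\bm{\Pi}}J^i_x(\bm{\pi})\ \forall i,x\}$. Common interest game: $\bm{\Pi}_{\rm opt}\ne\emptyset$ and for all $\tilde{\bm{\pi}}\notin\bm{\Pi}_{\rm opt}$ and all $i$, $\inf_{\bm{\pi}}\sum_xJ^i_x(\bm{\pi})<\sum_xJ^i_x(\tilde{\bm{\pi}})$.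 Inertial best reply kernel: for $\lambda\in[0,1]$, $R^{i,\lambda}(\tilde\pi^i\mid\pi^i,B^i)$ equals $1$ if $\pi^i\in B^i$ and $\tilde\pi^i=\pi^i$; $\lambda$ if $\pi^i\notin B^i$ and $\tilde\pi^i=\pi^i$; $(1-\lambda)/|B^i|$ if $\pi^i\notin B^i$ and $\tilde\pi^i\in B^i$; $0$ otherwise ($\pi^i,\tilde\pi^i\in\Pi^i$, $B^i\subseteq\Pi^i$). $\mathcal{P}(\Pi^i\mid\Pi^i\times2^{\Pi^i})$ is the set of stochastic kernels assigning a probability distribution on $\Pi^i$ to each pair $(\pi^i,B^i)$. $\mathrm{Unif}(\Pi^i)$ is the uniform distribution. Idealized Update Procedure (IUP): given $\bm{\pi}_k$, the DMs choose $\pi^i_{{k+1}}$ conditionally independently: if $\bm{\pi}_k\in\bm{\Pi}_{\rm opt}$, $\pi^i_{k+1}\sim(1-\gamma^i)R^{i,\lambda^i}(\cdot\mid\pi^i_k,\mathrm{BR}^i(\bm{\pi}^{-i}_k))+\gamma^i\,\mathrm{Unif}(\Pi^i)$; if $\bm{\pi}_k\notin\bm{\Pi}_{\rm opt}$, $\pi^i_{k+1}\sim(1-\kappa^i)h^i(\cdot\mid\pi^i_k,\mathrm{BR}^i(\bm{\pi}^{-i}_k))+\kappa^i\,\mathrm{Unif}(\Pi^i)$. *)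

(* Defs.v *)
From Stdlib Require Import Reals ClassicalEpsilon.
From mathcomp Require Import all_boot.
Set Implicit Arguments. Unset Strict Implicit. Unset Printing Implicit Defensive.

Local Open Scope R_scope.

Definition rsum (T : finType) (f : T -> R) : R := \big[Rplus/0]_(t : T) f t.

Definition Rleb (a b : R) : bool := if Rle_dec a b then true else false.

Unset Implicit Arguments.
Record game := Game {
  nP : nat;
  X : finType;
  U : 'I_nP -> finType;
  beta : 'I_nP -> R;
  JA := {dffun forall j : 'I_nP, U j};
  cost : 'I_nP -> X -> JA -> R;
  P : X -> JA -> X -> R                          (* P(y | x, u) *)
}.

Set Implicit Arguments.

Definition valid_game (G : game) : Prop :=
  (forall i, 0 < beta G i < 1) /\
  (forall i, 0 < #|U G i|)%N /\
  (forall x u y, 0 <= P G x u y) /\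
  (forall x u, rsum (fun y => P G x u y) = 1).

Section GameDefs.
Variable G : game.

Definition Pol (i : 'I_(nP G)) := {ffun X G -> U G i}.
Definition Prof := {dffun forall i : 'I_(nP G), Pol i}.

Definition ja (pi : Prof) (x : X G) : JA G := [ffun j => pi j x].

Definition upd (pi : Prof) (i : 'I_(nP G)) (s : Pol i) : Prof :=
  [ffun j => dfwith (fun k => pi k) s j].

Fixpoint pt (pi : Prof) (x : X G) (t : nat) (y : X G) : R :=
  match t with
  | O => if y == x then 1 else 0
  | S t' => rsum (fun z => pt pi x t' z * P G z (ja pi z) y)
  end.

Definition Ecost (i : 'I_(nP G)) (pi : Prof) (x : X G) (t : nat) : R :=
  rsum (fun y => pt pi x t y * cost G i y (ja pi y)).

Definition J (i : 'I_(nP G)) (pi : Prof) (x : X G) : R :=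
  epsilon (inhabits 0)
    (fun l => infinite_sum (fun t => (beta G i) ^ t * Ecost i pi x t) l).

Definition BR (pi : Prof) (i : 'I_(nP G)) : {set Pol i} :=
  [set s | [forall x, [forall sg : Pol i,
             Rleb (J i (upd pi s) x) (J i (upd pi sg) x)]]].

(* pi* in Pi_opt : J^i_x(pi* ) = inf_pi J^i_x(pi) for all i, x
   (inf over the finite set Pi is a min) *)
Definition opt (pis : Prof) : bool :=
  [forall i, [forall x, [forall pi : Prof, Rleb (J i pis x) (J i pi x)]]].

Definition common_interest : Prop :=
  (exists pis, opt pis) /\
  forall pt' : Prof, ~~ opt pt' -> forall i,
    exists pi : Prof, rsum (fun x => J i pi x) < rsum (fun x => J i pt' x).

Definition kernel (i : 'I_(nP G)) (h : Pol i -> {set Pol i} -> Pol i -> R) : Prop :=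
  (forall p B q, 0 <= h p B q) /\ (forall p B, rsum (fun q => h p B q) = 1).

Definition Rin (i : 'I_(nP G)) (lam : R) (p : Pol i) (B : {set Pol i}) (q : Pol i) : R :=
  if p \in B then (if q == p then 1 else 0)
  else if q == p then lam
  else if q \in B then (1 - lam) / INR #|B|
  else 0.

Definition unif (i : 'I_(nP G)) (q : Pol i) : R := 1 / INR #|{: Pol i}|.

Definition A (lam gam kap : 'I_(nP G) -> R)
  (h : forall i, Pol i -> {set Pol i} -> Pol i -> R) (pi pi' : Prof) : R :=
  \big[Rmult/1]_(i : 'I_(nP G))
    (if opt pi then
       (1 - gam i) * Rin (lam i) (pi i) (BR pi i) (pi' i) + gam i * unif (pi' i)
     else
       (1 - kap i) * h i (pi i) (BR pi i) (pi' i) + kap i * unif (pi' i)).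

Definition distr (mu : Prof -> R) : Prop :=
  (forall pi, 0 <= mu pi) /\ rsum mu = 1.

Definition mulA (M : Prof -> Prof -> R) (mu : Prof -> R) (pi' : Prof) : R :=
  rsum (fun pi => mu pi * M pi pi').

Fixpoint iterA (M : Prof -> Prof -> R) (mu : Prof -> R) (n : nat) : Prof -> R :=
  match n with O => mu | S n' => mulA M (iterA M mu n') end.

Definition stationary (M : Prof -> Prof -> R) (mu : Prof -> R) : Prop :=
  distr mu /\ forall pi, mulA M mu pi = mu pi.

Definition mass_opt (mu : Prof -> R) : R := rsum (fun pi => if opt pi then mu pi else 0).

End GameDefs.

(* Main.v *)
Require Import Defs.
From Stdlib Require Import Reals Lra Lia.
From HB Require Import structures.
From mathcomp Require Import all_boot.
Local Open Scope R_scope.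
Import Monoid.
Lemma RplusA : associative Rplus. Proof. by move=> *; rewrite Rplus_assoc. Qed.
Lemma RmultA : associative Rmult. Proof. by move=> *; rewrite Rmult_assoc. Qed.
HB.instance Definition _ := isComLaw.Build R 0 Rplus RplusA Rplus_comm Rplus_0_l.
HB.instance Definition _ := isComLaw.Build R 1 Rmult RmultA Rmult_comm Rmult_1_l.
HB.instance Definition _ := isMulLaw.Build R 0 Rmult Rmult_0_l Rmult_0_r.
HB.instance Definition _ := isAddLaw.Build R Rmult Rplus Rmult_plus_distr_r Rmult_plus_distr_l.

Lemma sum_prod_dep (I:finType) (T_: I -> finType) (F : forall i, T_ i -> R):
  \big[Rplus/0]_(t : {dffun forall i, T_ i}) \big[Rmult/1]_i F i (t i) =
  \big[Rmult/1]_i \big[Rplus/0]_(j : T_ i) F i j.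
Proof.
pose P_ := fun i => [ffun j : T_ i => F i j].
under [RHS]eq_bigr => i _ do rewrite (big_tag F i).
rewrite bigA_distr_big_dep.
transitivity (\big[Rplus/0]_(g in family (tagged_with T_))
     \big[Rmult/1]_(i : I) (untag 0 (P_ i) (g i))); last first.
  apply: eq_bigr => g _; apply: eq_bigr => i _.
  rewrite /untag; case: eqP => // e. by rewrite ffunE.
rewrite -(@big_fprod _ _ 1 _ _ _ _ P_).
rewrite (reindex (@dffun_of_fprod I T_)); last exact/onW_bij/dffun_of_fprod_bij.
apply: eq_bigr => t _; apply: eq_bigr => i _.
by rewrite /P_ ffunE /dffun_of_fprod ffunE.
Qed.

Section Rs.
Variable T : finType.
Implicit Types f g : T -> R.

Lemma rsum_le f g : (forall x, f x <= g x) -> rsum f <= rsum g.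
Proof. move=> H; rewrite /rsum; elim/big_rec2: _ => [|i a b _ Hab]; [lra|]. by have := H i; lra. Qed.

Lemma rsum_ge0 f : (forall x, 0 <= f x) -> 0 <= rsum f.
Proof. move=> H; rewrite /rsum; elim/big_rec: _ => [|i a _ Ha]; [lra|]. by have := H i; lra. Qed.

Lemma rsum_abs f : Rabs (rsum f) <= rsum (fun x => Rabs (f x)).
Proof. rewrite /rsum; elim/big_rec2: _ => [|i a b _ Hab]; first by rewrite Rabs_R0; lra.
by have := Rabs_triang (f i) b; lra. Qed.

Lemma rsum_plus f g : rsum (fun x => f x + g x) = rsum f + rsum g.
Proof. by rewrite /rsum big_split. Qed.

Lemma rsum_opp f : rsum (fun x => - f x) = - rsum f.
Proof. rewrite /rsum; elim/big_rec2: _ => [|i a b _ ->]; lra. Qed.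

Lemma rsum_minus f g : rsum (fun x => f x - g x) = rsum f - rsum g.
Proof. by rewrite /Rminus rsum_plus rsum_opp. Qed.

Lemma rsum_scal c f : rsum (fun x => c * f x) = c * rsum f.
Proof. by rewrite /rsum big_distrr. Qed.

Lemma rsum_scalr c f : rsum (fun x => f x * c) = rsum f * c.
Proof. by rewrite /rsum big_distrl. Qed.

Lemma rsum_const c : rsum (fun _ : T => c) = INR #|T| * c.
Proof. rewrite /rsum big_const; elim: #|T| => [|n IH] /=; first lra.
rewrite IH; case: n {IH} => [|n] /=; lra. Qed.

Lemma rsum_ext f g : (forall x, f x = g x) -> rsum f = rsum g.
Proof. by move=> H; rewrite /rsum; apply: eq_bigr. Qed.

Lemma rsum_term f x0 : (forall x, 0 <= f x) -> f x0 <= rsum f.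
Proof. move=> H; rewrite /rsum (bigD1 x0) //=.
have : 0 <= \big[Rplus/0]_(i | i != x0) f i.
  by elim/big_rec: _ => [|i a _ Ha]; [lra|]; have := H i; lra.
lra. Qed.

Lemma rsum_split f (p : pred T) :
  rsum f = rsum (fun x => if p x then f x else 0) + rsum (fun x => if p x then 0 else f x).
Proof. rewrite -rsum_plus; apply: rsum_ext => x; case: (p x); lra. Qed.

Lemma rsum_cv (F : nat -> T -> R) (l : T -> R) :
  (forall x, Un_cv (fun n => F n x) (l x)) -> Un_cv (fun n => rsum (F n)) (rsum l).
Proof.
move=> H; rewrite /rsum.
have : forall s : seq T, Un_cv (fun n => \big[Rplus/0]_(x <- s) F n x) (\big[Rplus/0]_(x <- s) l x).
  elim => [|a s IH].
    rewrite big_nil; apply: (Un_cv_ext (fun _ => 0)); first by move=> n; rewrite big_nil.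
    move=> e He; exists O => n _; rewrite /R_dist Rminus_0_r Rabs_R0; lra.
  rewrite big_cons; apply: (Un_cv_ext (fun n => F n a + \big[Rplus/0]_(x <- s) F n x)).
    by move=> n; rewrite big_cons.
  exact: CV_plus.
by move/(_ (index_enum T)).
Qed.

End Rs.

Lemma exch (T1 T2 : finType) (F : T1 -> T2 -> R) :
  rsum (fun y => rsum (fun x => F x y)) = rsum (fun x => rsum (fun y => F x y)).
Proof. by rewrite /rsum exchange_big. Qed.

Section MC.
Variable G : game.
Local Notation T := (Prof G).
Variable M : T -> T -> R.
Variable d : R.
Hypothesis Hd : 0 < d.
Hypothesis HM : forall x y, d <= M x y.
Hypothesis Hrow : forall x, rsum (M x) = 1.
Variable t0 : T.

Definition nrm (f : T -> R) := rsum (fun x => Rabs (f x)).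
Definition r := 1 - INR #|T| * d.

Lemma r_bounds : 0 <= r < 1.
Proof.
have H1 : INR #|T| * d <= 1.
  rewrite -(Hrow t0) -rsum_const; apply: rsum_le => y; exact: HM.
have H2 : 1 <= INR #|T|.
  have : (1 <= #|T|)%N by apply/card_gt0P; exists t0.
  by move/leP/le_INR.
rewrite /r; split; [lra|]. nra.
Qed.

Lemma mulA_sum f : rsum (mulA M f) = rsum f.
Proof.
rewrite /mulA exch; apply: rsum_ext => x.
by rewrite rsum_scal Hrow Rmult_1_r.
Qed.

Lemma contract f : rsum f = 0 -> nrm (mulA M f) <= r * nrm f.
Proof.
move=> Hf.
have E : forall y, mulA M f y = rsum (fun x => f x * (M x y - d)).
  move=> y; rewrite /mulA.
  under [RHS]rsum_ext => x do rewrite Rmult_minus_distr_l.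
  by rewrite rsum_minus rsum_scalr Hf; lra.
rewrite /nrm.
apply: (@Rle_trans _ (rsum (fun y => rsum (fun x => Rabs (f x) * (M x y - d))))).
  apply: rsum_le => y; rewrite E; apply: Rle_trans; first exact: rsum_abs.
  apply: rsum_le => x; rewrite Rabs_mult (Rabs_right (M x y - d)); first lra.
  by have := HM x y; lra.
rewrite exch -rsum_scal; apply: rsum_le => x.
rewrite rsum_scal rsum_minus rsum_const Hrow /r Rmult_comm; exact: Rle_refl.
Qed.

Lemma iter_sum f n : rsum (iterA M f n) = rsum f.
Proof. elim: n => [|n IH] //=; by rewrite mulA_sum. Qed.

Lemma mulA_ext f g y : (forall x, f x = g x) -> mulA M f y = mulA M g y.
Proof. by move=> H; apply: rsum_ext => x; rewrite H. Qed.

Lemma iter_contract f g n : rsum f = rsum g ->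
  nrm (fun y => iterA M f n y - iterA M g n y) <= r ^ n * nrm (fun y => f y - g y).
Proof.
move=> Hfg; elim: n => [|n IH] /=; first by rewrite Rmult_1_l; lra.
have E : forall y, mulA M (iterA M f n) y - mulA M (iterA M g n) y =
   mulA M (fun x => iterA M f n x - iterA M g n x) y.
  by move=> y; rewrite /mulA -rsum_minus; apply: rsum_ext => x; lra.
rewrite /nrm; under rsum_ext => y do rewrite E.
apply: Rle_trans; first apply: contract.
  by rewrite rsum_minus !iter_sum Hfg; lra.
have := r_bounds; have : 0 <= nrm (fun x => iterA M f n x - iterA M g n x).
  by apply: rsum_ge0 => x; apply: Rabs_pos.
rewrite /nrm in IH *; nra.
Qed.

Lemma iter_distr f n : distr f -> distr (iterA M f n).
Proof.
move=> [H0 H1]; split; last by rewrite iter_sum.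
elim: n => [|n IH] //= y; apply: rsum_ge0 => x.
by apply: Rmult_le_pos; [apply: IH| have := HM x y; lra].
Qed.

Lemma nrm_distr f g : distr f -> distr g -> nrm (fun y => f y - g y) <= 2.
Proof.
move=> [Hf0 Hf1] [Hg0 Hg1]; rewrite /nrm.
apply: (@Rle_trans _ (rsum (fun y => f y + g y))).
  apply: rsum_le => y; have := Hf0 y; have := Hg0 y.
  by move=> *; apply: Rabs_le; lra.
by rewrite rsum_plus; lra.
Qed.

Lemma coord_le f y : Rabs (f y) <= nrm f.
Proof. by rewrite /nrm; apply: (@rsum_term _ (fun x => Rabs (f x)) y) => x; apply: Rabs_pos. Qed.

Lemma iterA_add f k n y : iterA M f (n + k) y = iterA M (iterA M f k) n y.
Proof. elim: n y => [|n IH] y //=; by apply: mulA_ext. Qed.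

Lemma geo_cv C : Un_cv (fun n => r ^ n * C) 0.
Proof.
move=> e He. have [rb1 rb2] := r_bounds.
have [->|HC] := Req_dec C 0.
  by exists O => n _; rewrite /R_dist Rmult_0_r Rminus_0_r Rabs_R0.
have HC' : 0 < Rabs C by apply: Rabs_pos_lt.
have [N HN] := pow_lt_1_zero r (ltac:(rewrite Rabs_right; lra)) (e / Rabs C) (ltac:(apply: Rdiv_lt_0_compat; lra)).
exists N => n Hn; rewrite /R_dist Rminus_0_r Rabs_mult.
have := HN n Hn. move=> H.
apply: (Rmult_lt_reg_r (/ Rabs C)); first by apply: Rinv_0_lt_compat.
rewrite Rmult_assoc Rinv_r; [|lra]. rewrite Rmult_1_r; exact H.
Qed.

Lemma squeeze (u : nat -> R) l C : (forall n, Rabs (u n - l) <= r ^ n * C) -> Un_cv u l.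
Proof.
move=> H e He; have [N HN] := geo_cv C e He; exists N => n Hn.
have := HN n Hn; rewrite /R_dist Rminus_0_r => H2.
have := H n; have := Rle_abs (r ^ n * C); lra.
Qed.

Lemma cv_const c : Un_cv (fun _ => c) c.
Proof. by move=> e He; exists O => n _; rewrite /R_dist Rminus_diag Rabs_R0. Qed.

Lemma iter_stat f n y : (forall x, mulA M f x = f x) -> iterA M f n y = f y.
Proof. move=> H; elim: n y => [|n IH] y //=; rewrite -H; apply: mulA_ext => x; exact: IH. Qed.

Lemma iter_bound f g n y : distr f -> distr g ->
  Rabs (iterA M f n y - iterA M g n y) <= r ^ n * 2.
Proof.
move=> Hf Hg.
apply: Rle_trans; first exact: (coord_le (fun y => iterA M f n y - iterA M g n y) y).
apply: Rle_trans; first apply: iter_contract.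
  by case: Hf => _ ->; case: Hg => _ ->.
have := nrm_distr _ _ Hf Hg; have := r_bounds => -[? ?].
have := pow_le r n ltac:(lra); nra.
Qed.

Lemma mc_main : exists mus : T -> R,
  stationary M mus /\ (forall nu, stationary M nu -> forall pi, nu pi = mus pi) /\ (forall mu0, distr mu0 -> forall pi, Un_cv (fun n => iterA M mu0 n pi) (mus pi)).
Proof.
have Dm : distr (M t0).
  by split => [x|]; [have := HM t0 x; lra | exact: Hrow].
pose s n := iterA M (M t0) n.
have Cs : forall y, Cauchy_crit (fun n => s n y).
  move=> y e He; have [N HN] := geo_cv 2 e He; exists N => n m Hn Hm.
  have B : forall n k, Rabs (s (n + k)%nat y - s n y) <= r ^ n * 2.
    move=> n' k; rewrite /s iterA_add; apply: iter_bound => //; exact: iter_distr.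
  have HN' : forall n, (n >= N)%coq_nat -> r ^ n * 2 < e.
    move=> n' H'; have := HN n' H'; rewrite /R_dist Rminus_0_r => H2.
    have := Rle_abs (r ^ n' * 2); lra.
  rewrite /R_dist; have [Hnm|Hnm] := Nat.le_ge_cases n m.
    have [k [-> _]] := Nat.le_exists_sub n m Hnm; rewrite Nat.add_comm.
    rewrite Rabs_minus_sym; apply: Rle_lt_trans; [exact: B| exact: HN'].
  have [k [-> _]] := Nat.le_exists_sub m n Hnm; rewrite Nat.add_comm.
  apply: Rle_lt_trans; [exact: B| exact: HN'].
pose w y := proj1_sig (R_complete _ (Cs y)).
have Hw : forall y, Un_cv (fun n => s n y) (w y) by move=> y; exact: proj2_sig (R_complete _ (Cs y)).
have Sw : stationary M w.
  split; first split.
  - move=> y; apply: (@Rle_cv_lim (fun _ => 0) (fun n => s n y)); [|exact: cv_const|exact: Hw].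
    by move=> n; case: (iter_distr _ n Dm) => H _; exact: H.
  - apply: (UL_sequence (fun n => rsum (s n))); first exact: rsum_cv.
    apply: (Un_cv_ext (fun _ => 1)); last exact: cv_const.
    by move=> n; case: (iter_distr _ n Dm) => _ ->.
  - move=> y; apply: (UL_sequence (fun n => s (S n) y)).
      apply: (Un_cv_ext (fun n => rsum (fun x => s n x * M x y))) => //.
      apply: rsum_cv => x; apply: CV_mult; [exact: Hw|exact: cv_const].
    move=> e He; have [N HN] := Hw y e He; exists N => n Hn; apply: HN; lia.
have Cv : forall mu0, distr mu0 -> forall pi, Un_cv (fun n => iterA M mu0 n pi) (w pi).
  move=> mu0 Hmu pi; apply: (squeeze _ _ 2) => n.
  rewrite -(iter_stat _ n pi (proj2 Sw)); apply: iter_bound => //; exact: proj1 Sw.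
exists w; split => //; split => // nu Hnu pi.
apply: (UL_sequence (fun n => iterA M nu n pi)); last exact: Cv (proj1 Hnu) pi.
apply: (Un_cv_ext (fun _ => nu pi)); last exact: cv_const.
by move=> n; rewrite iter_stat //; case: Hnu.
Qed.
End MC.

Lemma prod_le (I : finType) (f g : I -> R) :
  (forall i, 0 <= f i <= g i) -> \big[Rmult/1]_(i : I) f i <= \big[Rmult/1]_(i : I) g i.
Proof.
move=> H.
suff : 0 <= \big[Rmult/1]_(i : I) f i <= \big[Rmult/1]_(i : I) g i by case.
elim/big_rec2: _ => [|i a b _ [Ha Hab]]; first lra.
have [H1 H2] := H i; split; [nra|]. apply: Rmult_le_compat => //.
Qed.

Lemma prod_pos (I : finType) (f : I -> R) :
  (forall i, 0 < f i) -> 0 < \big[Rmult/1]_(i : I) f i.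
Proof. move=> H; elim/big_rec: _ => [|i a _ Ha]; first lra. by have := H i; nra. Qed.

Lemma prod_bern (I : finType) (g : I -> R) :
  (forall i, 0 <= g i <= 1) -> 1 - rsum g <= \big[Rmult/1]_(i : I) (1 - g i).
Proof.
move=> H; rewrite /rsum.
suff : 0 <= \big[Rplus/0]_(i : I) g i /\ 1 - \big[Rplus/0]_(i : I) g i <= \big[Rmult/1]_(i : I) (1 - g i) by case.
elim/big_rec2: _ => [|i a b _ [Ha Hab]]; first lra.
have [H1 H2] := H i; split; [lra|]. nra.
Qed.

Section Game.
Variable G : game.
Hypothesis HG : valid_game G.

Lemma Pol_card (i : 'I_(nP G)) : (0 < #|{: Pol i}|)%N.
Proof.
case: HG => _ [HU _]; case/card_gt0P: (HU i) => u _.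
by apply/card_gt0P; exists [ffun _ => u].
Qed.

Lemma INR_Pol (i : 'I_(nP G)) : 0 < INR #|{: Pol i}|.
Proof. apply: lt_0_INR; apply/ltP; exact: Pol_card. Qed.

Lemma unif_pos (i : 'I_(nP G)) (q : Pol i) : 0 < unif q.
Proof. rewrite /unif; have := INR_Pol i => H; apply: Rdiv_lt_0_compat; lra. Qed.

Lemma unif_sum (i : 'I_(nP G)) : rsum (fun q : Pol i => unif q) = 1.
Proof.
rewrite /unif rsum_const; have := INR_Pol i => H.
change (INR #|{: Pol i}| * (1 / INR #|{: Pol i}|) = 1); field; lra.
Qed.

Lemma Rin_ge0 (i : 'I_(nP G)) lam (p : Pol i) (B : {set Pol i}) q : 0 <= lam <= 1 -> 0 <= Rin lam p B q.
Proof.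
move=> Hl; rewrite /Rin; case: (p \in B); first by case: (q == p); lra.
case: (q == p); first lra.
case Hq: (q \in B); last lra.
have : 0 < INR #|B| by apply: lt_0_INR; apply/ltP; apply/card_gt0P; exists q.
move=> H; apply: Rmult_le_pos; [lra|apply: Rlt_le; apply: Rinv_0_lt_compat; lra].
Qed.

Lemma rsum_delta (T : finType) (p : T) : rsum (fun q => if q == p then 1 else 0) = 1.
Proof.
rewrite /rsum (bigD1 p) //= eqxx big1; first lra.
by move=> q /negbTE ->.
Qed.

Lemma Rin_sum (i : 'I_(nP G)) lam (p : Pol i) (B : {set Pol i}) : p \in B -> rsum (Rin lam p B) = 1.
Proof.
move=> Hp; rewrite -(rsum_delta _ p); apply: rsum_ext => q; by rewrite /Rin Hp.
Qed.

Lemma upd_self (pi : Prof G) (i : 'I_(nP G)) : upd pi (pi i) = pi.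
Proof. by apply/ffunP => j; rewrite ffunE; case: dfwithP. Qed.

Lemma Rleb_le a b : Rleb a b -> a <= b.
Proof. by rewrite /Rleb; case: Rle_dec. Qed.

Lemma opt_BR (pi : Prof G) (i : 'I_(nP G)) : opt pi -> pi i \in BR pi i.
Proof.
move/forallP/(_ i) => Ho; rewrite inE; apply/forallP => x; apply/forallP => sg.
rewrite upd_self; by move/forallP/(_ x)/forallP/(_ (upd pi sg)): Ho.
Qed.

Section AL.
Variables (lam gam kap : 'I_(nP G) -> R) (h : forall i : 'I_(nP G), Pol i -> {set Pol i} -> Pol i -> R).
Hypothesis Hl : forall i, 0 <= lam i <= 1.
Hypothesis Hg : forall i, 0 < gam i < 1.
Hypothesis Hk : forall i, 0 < kap i < 1.
Hypothesis Hh : forall i, kernel (h i).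

Definition Fa (pi : Prof G) (i : 'I_(nP G)) (q : Pol i) : R :=
  if opt pi then
       (1 - gam i) * Rin (lam i) (pi i) (BR pi i) q + gam i * unif q
     else
       (1 - kap i) * h i (pi i) (BR pi i) q + kap i * unif q.

Lemma A_Fa pi pi' : A lam gam kap h pi pi' = \big[Rmult/1]_(i : 'I_(nP G)) Fa pi i (pi' i).
Proof. by []. Qed.

Lemma A_row pi : rsum (A lam gam kap h pi) = 1.
Proof.
transitivity (\big[Rmult/1]_(i : 'I_(nP G)) rsum (fun q : Pol i => Fa pi i q)).
  rewrite /rsum; exact (sum_prod_dep _ _ (fun i (q : Pol i) => Fa pi i q)).
rewrite big1 // => i _; rewrite /Fa; case Ho: (opt pi).
  rewrite rsum_plus rsum_scal rsum_scal (Rin_sum _ _ _ _ (opt_BR _ _ Ho)) unif_sum; ring.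
rewrite rsum_plus rsum_scal rsum_scal unif_sum; case: (Hh i) => _ ->; ring.
Qed.

Lemma Fa_ge pi i (q : Pol i) : Rmin (gam i) (kap i) * unif q <= Fa pi i q.
Proof.
have := unif_pos _ q; have := Hg i; have := Hk i.
have := Rmin_l (gam i) (kap i); have := Rmin_r (gam i) (kap i).
rewrite /Fa; case: (opt pi).
  have := Rin_ge0 _ _ (pi i) (BR pi i) q (Hl i); nra.
case: (Hh i) => H0 _; have := H0 (pi i) (BR pi i) q; nra.
Qed.

Definition dA := \big[Rmult/1]_(i : 'I_(nP G)) (Rmin (gam i) (kap i) * (1 / INR #|{: Pol i}|)).

Lemma dA_pos : 0 < dA.
Proof.
apply: prod_pos => i; have := INR_Pol i; have := Hg i; have := Hk i => *.
apply: Rmult_lt_0_compat; first by apply: Rmin_pos; lra.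
apply: Rdiv_lt_0_compat; lra.
Qed.

Lemma A_ge pi pi' : dA <= A lam gam kap h pi pi'.
Proof.
rewrite A_Fa /dA; apply: prod_le => i; split; last exact: Fa_ge.
have := unif_pos _ (pi' i); have := Hg i; have := Hk i => *.
apply: Rmult_le_pos; first by apply: Rlt_le; apply: Rmin_pos; lra.
by have := unif_pos _ (pi' i); rewrite /unif; lra.
Qed.

Lemma A_self pi : opt pi -> \big[Rmult/1]_(i : 'I_(nP G)) (1 - gam i) <= A lam gam kap h pi pi.
Proof.
move=> Ho; rewrite A_Fa; apply: prod_le => i; have := Hg i; have := unif_pos _ (pi i) => *.
split; first lra.
rewrite /Fa Ho /Rin (opt_BR _ _ Ho) eqxx; nra.
Qed.

Lemma A_to pi pis : ~~ opt pi ->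
  \big[Rmult/1]_(i : 'I_(nP G)) (kap i * (1 / INR #|{: Pol i}|)) <= A lam gam kap h pi pis.
Proof.
move=> Ho; rewrite A_Fa; apply: prod_le => i; have := Hk i; have := unif_pos _ (pis i).
rewrite /unif => Hu Hki.
split; first by nra.
rewrite /Fa (negbTE Ho); case: (Hh i) => H0 _; have := H0 (pi i) (BR pi i) (pis i).
rewrite /unif; nra.
Qed.
End AL.
End Game.
Theorem lemma2 (G : game) (HG : valid_game G) (HCI : common_interest G) :
  (forall (lam gam kap : 'I_(nP G) -> R)
          (h : forall i, Pol i -> {set Pol i} -> Pol i -> R),
     (forall i, (0 <= lam i <= 1)) ->
     (forall i, (0 < gam i < 1)) ->
     (forall i, (0 < kap i < 1)) ->
     (forall i, kernel (h i)) ->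
     exists mus : Prof G -> R,
       stationary (A lam gam kap h) mus /\
       (forall nu, stationary (A lam gam kap h) nu -> forall pi, nu pi = mus pi) /\
       (forall mu0, distr mu0 -> forall pi,
          Un_cv (fun n => iterA (A lam gam kap h) mu0 n pi) (mus pi))) /\
  (forall (eps : R) (kap : 'I_(nP G) -> R),
     (0 < eps < 1) ->
     (forall i, (0 < kap i < 1)) ->
     exists gbar : R, (0 < gbar) /\
       forall (lam gam : 'I_(nP G) -> R)
              (h : forall i, Pol i -> {set Pol i} -> Pol i -> R),
         (forall i, (0 <= lam i <= 1)) ->
         (forall i, (0 < gam i < gbar)) ->
         (forall i, kernel (h i)) ->
         forall mus, stationary (A lam gam kap h) mus ->
           (1 - eps / 2 <= mass_opt mus)).
Proof.
case: HCI => [[pis Hpis] _].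
split.
  move=> lam gam kap h Hl Hg Hk Hh.
  exact: (mc_main G (A lam gam kap h) (dA G gam kap) (dA_pos G HG gam kap Hg Hk) (A_ge G HG lam gam kap h Hl Hg Hk Hh) (A_row G HG lam gam kap h Hh) pis).
move=> eps kap He Hk.
pose c := \big[Rmult/1]_(i : 'I_(nP G)) (kap i * (1 / INR #|{: Pol i}|)).
have Hc : 0 < c.
  apply: prod_pos => i; have := INR_Pol G HG i; have := Hk i => *.
  apply: Rmult_lt_0_compat; [lra|apply: Rdiv_lt_0_compat; lra].
pose N := INR #|'I_(nP G)|.
have HN : 0 <= N by apply: pos_INR.
pose g1 := c * eps / (2 * (N + 1)).
have Hg1 : 0 < g1 by rewrite /g1; apply: Rdiv_lt_0_compat; nra.
have HNg : N * g1 <= c * eps / 2.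
  have -> : N * g1 = c * eps / 2 * (N / (N + 1)) by rewrite /g1; field; lra.
  have : N / (N + 1) <= 1.
    apply: (Rmult_le_reg_r (N + 1)); first lra.
    rewrite /Rdiv Rmult_assoc Rinv_l; lra.
  have : 0 < c * eps / 2 by nra.
  nra.
exists (Rmin g1 (1/2)); split; first by apply: Rmin_pos; lra.
move=> lam gam h Hl Hg Hh mus [[Hm0 Hm1] Hst].
have Hg' : forall i, 0 < gam i < 1.
  by move=> i; have := Hg i; have := Rmin_r g1 (1/2); lra.
pose S := rsum gam.
have HS : S <= N * g1.
  rewrite /S /N -rsum_const; apply: rsum_le => i; have := Hg i; have := Rmin_l g1 (1/2); lra.
have HS0 : 0 <= S by apply: rsum_ge0 => i; have := Hg i; lra.
pose Am := A lam gam kap h.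
pose q := rsum (fun pi => if opt pi then 0 else mus pi).
have Hmq : mass_opt mus + q = 1 by rewrite -Hm1 /mass_opt /q -rsum_split.
have Hq0 : 0 <= q by apply: rsum_ge0 => pi; case: (opt pi) => //; lra.
pose a pi := rsum (fun pi' => if opt pi' then 0 else Am pi pi').
have Hq : q = rsum (fun pi => mus pi * a pi).
  rewrite /q; under rsum_ext => pi' do rewrite -Hst.
  rewrite /mulA.
  transitivity (rsum (fun pi' => rsum (fun pi => if opt pi' then 0 else mus pi * Am pi pi'))).
    apply: rsum_ext => pi'; case: (opt pi') => //.
    by rewrite rsum_const Rmult_0_r.
  rewrite exch; apply: rsum_ext => pi; rewrite /a -rsum_scal; apply: rsum_ext => pi'.
  by case: (opt pi'); lra.
have Ha : forall pi, a pi = 1 - rsum (fun pi' => if opt pi' then Am pi pi' else 0).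
  move=> pi; rewrite -(A_row G HG lam gam kap h Hh pi) (rsum_split _ _ (fun pi' => opt pi')) /a /Am; lra.
have HA0 : forall pi pi', 0 <= Am pi pi'.
  move=> pi pi'; have := A_ge G HG lam gam kap h Hl Hg' Hk Hh pi pi'; have := dA_pos G HG gam kap Hg' Hk; rewrite /Am; lra.
have Hb : forall pi, mus pi * a pi <= (if opt pi then mus pi * S else mus pi * (1 - c)).
  move=> pi; have := Hm0 pi; rewrite Ha; case Ho: (opt pi) => H0.
    have H1 := A_self G HG lam gam kap h Hg' pi Ho.
    have H2 := prod_bern _ gam (fun i => ltac:(have := Hg' i; lra)).
    have H3 : Am pi pi <= rsum (fun pi' => if opt pi' then Am pi pi' else 0).
      have := @rsum_term _ (fun pi' => if opt pi' then Am pi pi' else 0) pi.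
      rewrite Ho; apply => x; case: (opt x); [exact: HA0|lra].
    have H4 : 1 - rsum (fun pi' => if opt pi' then Am pi pi' else 0) <= S.
      have H5 : 1 - S <= Am pi pi := Rle_trans _ _ _ H2 H1. lra.
    apply: Rmult_le_compat_l => //.
  have H1 := A_to G HG lam gam kap h Hk Hh pi pis (negbT Ho).
  have H3 : Am pi pis <= rsum (fun pi' => if opt pi' then Am pi pi' else 0).
    have := @rsum_term _ (fun pi' => if opt pi' then Am pi pi' else 0) pis.
    rewrite Hpis; apply => x; case: (opt x); [exact: HA0|lra].
  have H4 : 1 - rsum (fun pi' => if opt pi' then Am pi pi' else 0) <= 1 - c.
    have H5 : c <= Am pi pis := H1. lra.
  apply: Rmult_le_compat_l => //.
have Hb2 : rsum (fun pi => if opt pi then mus pi * S else mus pi * (1 - c)) = mass_opt mus * S + q * (1 - c).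
  rewrite (rsum_split _ _ (fun pi => opt pi)) /mass_opt /q -rsum_scalr -rsum_scalr.
  by congr (_ + _); apply: rsum_ext => pi; case: (opt pi); ring.
have Hq2 : q <= mass_opt mus * S + q * (1 - c).
  rewrite -Hb2 Hq; exact: (rsum_le _ _ _ Hb).
have Hm1' : mass_opt mus <= 1 by lra.
have HmS : mass_opt mus * S <= S by have := Rmult_le_compat_r S _ _ HS0 Hm1'; lra.
have : c * q <= c * (eps / 2) by lra.
have : c * q <= c * (eps / 2) by nra.
move=> H; have := Rmult_le_reg_l _ _ _ Hc H; lra.
Qed.
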